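(* Let $G$ be a planar PCC graph and let $\sigma$ be a face of $G$ such that some vertex occurs more than once in the boundary walk of $\sigma$ (i.e. the multiset $V(\sigma)$ of boundary vertices is not a set). Then $7\le|\sigma|\le 11$. The same conclusion holds if some edge occurs more than once in the boundary walk of $\sigma$ (i.e. the multiset $E(\sigma)$ of boundary edges is not a set).
   Context: $G$ is a finite simple connected graph 2-cell embedded in the sphere. For a face $\sigma$, $V(\sigma)$ and $E(\sigma)$ are the multisets of vertices and edges traversed by the boundary walk of $\sigma$, and $|\sigma|$ is its length. For a vertex $v$, $F(v)$ is the multiset of faces incident to $v$ (one per corner) and $K(v)=1-\frac{\deg(v)}{2}+\sum_{\sigma\in F(v)}\frac1{|\sigma|}$. A prism (resp. antiprism) of order $N$ is the planar graph with $2N$ vertices, two $N$-faces and $N$ quadrilaterals (resp. $2N$ triangles), each vertex incident to two quadrilaterals and one $N$-face (resp. three triangles and one $N$-face). A planar PCC graph is such a $G$ with $K(v)>0$, $\deg(v)\ge 3$ for all $v$, not a prism or antiprism. *)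

(* Defs.v *)
(* Planar maps encoded as rotation systems on darts. *)
From mathcomp Require Import all_boot all_order all_algebra.
Set Implicit Arguments. Unset Strict Implicit. Unset Printing Implicit Defensive.
Import GRing.Theory Num.Theory.

Section Maps.
Variables (D : finType) (alpha sigma : D -> D).

(* alpha : edge reversal (dart d ~ oriented edge, alpha d its reverse);
   sigma : rotation of darts around their tail vertex;
   vertices = sigma-orbits, edges = alpha-orbits, faces = phi-orbits. *)
Definition face_perm (d : D) : D := sigma (alpha d).

Definition num_vertices : nat := #|[pred d | froots sigma d]|.
Definition num_faces : nat := #|[pred d | froots face_perm d]|.
Definition num_edges : nat := #|D| %/ 2.

(* 2-cell embedding of a connected graph in the sphere *)
Definition sphere_map : Prop :=
  [/\ injective sigma,
      (forall d, alpha (alpha d) = d),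
      (forall d, alpha d != d),
      (forall x y, connect (fun a b => (b == sigma a) || (b == alpha a)) x y)
    & num_vertices + num_faces = num_edges + 2].

Definition simple_map : Prop :=
  (forall d, ~~ fconnect sigma d (alpha d)) /\
  (forall d1 d2, fconnect sigma d1 d2 -> fconnect sigma (alpha d1) (alpha d2) ->
                 d1 = d2).

Definition deg (d : D) : nat := order sigma d.
Definition face_len (d : D) : nat := order face_perm d.

(* combinatorial curvature of the tail vertex of d; corners at that vertex
   correspond to darts e in its sigma-orbit, the corner face being that of e *)
Definition curvature (d : D) : rat :=
  (1 - (deg d)%:R / 2 + \sum_(e : D | fconnect sigma d e) ((face_len e)%:R)^-1)%R.

Definition face_lengths : seq nat :=
  [seq face_len d | d <- enum D & froots face_perm d].
Definition corner_lengths (d : D) : seq nat :=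
  [seq face_len e | e <- enum D & fconnect sigma d e].

Definition is_prism : Prop :=
  exists N, [/\ 3 <= N, num_vertices = 2 * N,
     perm_eq face_lengths (nseq 2 N ++ nseq N 4)
   & forall d, perm_eq (corner_lengths d) [:: 4; 4; N]].

Definition is_antiprism : Prop :=
  exists N, [/\ 3 <= N, num_vertices = 2 * N,
     perm_eq face_lengths (nseq 2 N ++ nseq (2 * N) 3)
   & forall d, perm_eq (corner_lengths d) [:: 3; 3; 3; N]].

Definition planar_PCC : Prop :=
  [/\ sphere_map, simple_map,
      (forall d, 0 < curvature d)%R,
      (forall d, 3 <= deg d)
    & ~ is_prism /\ ~ is_antiprism].

Definition face_vertex_repeat (d : D) : Prop :=
  exists d1 d2, [/\ fconnect face_perm d d1, fconnect face_perm d d2,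
                    d1 != d2 & fconnect sigma d1 d2].

Definition face_edge_repeat (d : D) : Prop :=
  exists d1, fconnect face_perm d d1 /\ fconnect face_perm d (alpha d1).

End Maps.

(* Main.v *)
Require Import Defs.
From mathcomp Require Import all_boot all_order all_algebra.
From mathcomp Require Import ring lra zify.
Import GRing.Theory Num.Theory.
Set Implicit Arguments. Unset Strict Implicit.

Section Aux.
Variables (D : finType) (alpha sigma : D -> D).
Hypothesis sinj : injective sigma.
Hypothesis ainv : forall d, alpha (alpha d) = d.
Hypothesis noloop : forall d, ~~ fconnect sigma d (alpha d).
Hypothesis nomult : forall d1 d2, fconnect sigma d1 d2 ->
   fconnect sigma (alpha d1) (alpha d2) -> d1 = d2.
Hypothesis deg3 : forall d, 3 <= deg sigma d.

Local Notation phi := (face_perm alpha sigma).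

Lemma phi_inj : injective phi.
Proof. apply: inj_comp => //; exact: (can_inj ainv). Qed.

Lemma sym_s x y : fconnect sigma x y -> fconnect sigma y x.
Proof. by rewrite fconnect_sym. Qed.

Lemma trans_s x y z : fconnect sigma x y -> fconnect sigma y z -> fconnect sigma x z.
Proof. exact: connect_trans. Qed.

Lemma nofix z : sigma z != z.
Proof.
apply/eqP => Hz; have := deg3 z; rewrite /deg /order.
have -> : #|fconnect sigma z| = #|pred1 z|.
  apply: eq_card => w; rewrite !inE; apply/idP/eqP => [H|->]; last exact: connect0.
  by rewrite -(iter_findex H) iter_fix.
by rewrite card1.
Qed.

Lemma noshort x j : fconnect sigma x (iter j phi x) -> j = 1 \/ j = 2 -> False.
Proof.
move=> H [E|E]; subst j.
- rewrite /= /face_perm in H.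
  have H2 : fconnect sigma (alpha x) (sigma (alpha x)) by exact: fconnect1.
  by move/negP: (noloop x); apply; apply: trans_s H (sym_s H2).
- rewrite /= /face_perm in H.
  set z := sigma (alpha x) in H *.
  have H1 : fconnect sigma (alpha x) z by exact: fconnect1.
  have H2 : fconnect sigma (alpha z) (sigma (alpha z)) by exact: fconnect1.
  have H3 : fconnect sigma (alpha (alpha x)) (alpha z).
    by rewrite ainv; apply: trans_s H (sym_s H2).
  have E := nomult H1 H3.
  have Ef : sigma (alpha x) = alpha x by rewrite {2}E.
  by move/eqP: (nofix (alpha x)).
Qed.

Lemma face_len_ge3 e : 3 <= face_len alpha sigma e.
Proof.
rewrite /face_len; have := order_gt0 phi e; have := iter_order phi_inj e.
case: (order phi e) => [|[|[|n]]] // He _; exfalso.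
- by apply: (noshort (x:=e) (j:=1)); [rewrite He; exact: connect0 | left].
- by apply: (noshort (x:=e) (j:=2)); [rewrite He; exact: connect0 | right].
Qed.

Lemma ge3 x j : fconnect sigma x (iter j phi x) -> x != iter j phi x -> 3 <= j.
Proof.
move=> H Hne; case: j H Hne => [|[|[|j]]] // H Hne.
- by rewrite eqxx in Hne.
- by exfalso; apply: (noshort H); left.
- by exfalso; apply: (noshort H); right.
Qed.

Lemma no3 b : iter 3 phi b = sigma b -> False.
Proof.
move=> /= E; rewrite {3}/face_perm -{2}(ainv b) in E.
have E2 := phi_inj E.
set z := phi b in E2.
have Hz : fconnect sigma (alpha b) z by exact: fconnect1.
have H2 : fconnect sigma (alpha z) (phi z) by exact: fconnect1.
move/negP: (noloop z); apply.
by apply: trans_s (sym_s Hz) _; rewrite -E2; apply: sym_s.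
Qed.

Lemma face_len_eq x y : fconnect phi x y -> face_len alpha sigma x = face_len alpha sigma y.
Proof.
move=> H; rewrite /face_len /order; apply: eq_card => w.
by rewrite !inE (same_connect (fconnect_sym phi_inj) H).
Qed.

Lemma ordsum x y : fconnect phi x y ->
  iter (face_len alpha sigma x - findex phi x y) phi y = x.
Proof.
move=> H; rewrite -{2}(iter_findex H) -iterD subnK; last first.
  by apply: ltnW; apply: findex_max.
exact: iter_order phi_inj x.
Qed.

Lemma vertex_case d d1 d2 :
  (forall d, 0 < curvature alpha sigma d)%R ->
  fconnect phi d d1 -> fconnect phi d d2 -> d1 != d2 -> fconnect sigma d1 d2 ->
  7 <= face_len alpha sigma d <= 11.
Proof.
move=> Hcurv H1 H2 Hne Hs.
have Hn1 := face_len_eq H1; have Hn2 := face_len_eq H2.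
set n := face_len alpha sigma d in Hn1 Hn2 *.
have H12 : fconnect phi d1 d2.
  by apply: connect_trans _ H2; rewrite fconnect_sym //; exact: phi_inj.
set j := findex phi d1 d2.
have Hj : iter j phi d1 = d2 by exact: iter_findex.
have Hjn : j < n by rewrite Hn1; exact: findex_max.
have Hback : iter (n - j) phi d2 = d1 by rewrite Hn1; exact: ordsum.
have j3 : 3 <= j by apply: (ge3 (x:=d1)); rewrite Hj.
have nj3 : 3 <= n - j.
  by apply: (ge3 (x:=d2)); rewrite Hback // 1?eq_sym //; apply: sym_s.
have n6 : 6 <= n by lia.
have C := Hcurv d1; rewrite /curvature in C.
set m := deg sigma d1 in C.
have Hsum : (\sum_(e | fconnect sigma d1 e) ((face_len alpha sigma e)%:R^-1 - 3%:R^-1)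
     <= 2%:R * (n%:R^-1 - 3%:R^-1) :> rat)%R.
  rewrite (bigD1 d1) ?connect0 //= (bigD1 d2) /=; last by rewrite Hs eq_sym.
  rewrite -Hn1 -Hn2.
  set R := (\sum_(i | _) _)%R.
  have : (R <= 0)%R.
    apply: sumr_le0 => e _; rewrite subr_le0 lef_pV2 ?posrE ?ltr0n ?ler_nat //.
      exact: face_len_ge3.
    by apply: leq_trans (face_len_ge3 e).
  set a := ((n%:R : rat)^-1)%R; set t := ((3%:R : rat)^-1)%R.
  move=> HR; lra.
rewrite sumrB sumr_const in Hsum.
have Hm : #|[pred e | fconnect sigma d1 e]| = m by [].
have Hm' : (3%:R^-1 *+ #|[pred e | fconnect sigma d1 e]| = m%:R / 3%:R :> rat)%R.
  by rewrite -[(_ *+ #|_|)%R]mulr_natl.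
rewrite Hm' in Hsum.
have Ha : (n%:R^-1 <= 6%:R^-1 :> rat)%R.
  by rewrite lef_pV2 ?posrE ?ltr0n ?ler_nat //; lia.
have m3 : m = 3.
  have : (m%:R < 4%:R :> rat)%R.
    move: C Hsum Ha; set S := (\sum_(_ | _) _)%R; set a := (n%:R^-1)%R.
    move=> C Hsum Ha.
    have e3 : ((3%:R:rat)^-1 = 1/3)%R by [].
    have e6 : ((6%:R:rat)^-1 = 1/6)%R by [].
    rewrite e6 in Ha; rewrite e3 in Hsum; lra.
  rewrite ltr_nat => Hlt; have := deg3 d1; rewrite -/m; lia.
have n12 : n < 12.
  rewrite ltnNge; apply/negP => Hn.
  have Hb : (n%:R^-1 <= 12%:R^-1 :> rat)%R.
    by rewrite lef_pV2 ?posrE ?ltr0n ?ler_nat //; lia.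
  move: C Hsum Hb; rewrite m3; set S := (\sum_(_ | _) _)%R; set a := (n%:R^-1)%R.
  have e3 : ((3%:R:rat)^-1 = 1/3)%R by [].
  have e12 : ((12%:R:rat)^-1 = 1/12)%R by [].
  rewrite e3 e12 => C Hsum Hb; move: C Hsum Hb; clear; move=> C Hsum Hb; lra.
have Ho : order sigma d1 = 3 by rewrite -m3.
have Hit3 : iter 3 sigma d1 = d1 by rewrite -{1}Ho; exact: iter_order.
have Hk := findex_max Hs; rewrite Ho in Hk.
have Hk2 := iter_findex Hs.
have [b [Hb1 Hb2]] : exists b, fconnect phi d1 b /\ fconnect phi d1 (sigma b) /\ True.
  move: Hk Hk2; case: (findex sigma d1 d2) => [|[|[|]]] // _ /= E.
  - by rewrite -E eqxx in Hne.
  - exists d1; split; first exact: connect0.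
    by split => //; rewrite E.
  - exists d2; split; first exact: H12.
    split => //; rewrite -E -[X in fconnect _ _ X]/(iter 3 sigma d1) Hit3; exact: connect0.
case: Hb2 => Hb2 _.
have Hnb : face_len alpha sigma b = n by rewrite -(face_len_eq Hb1) Hn1.
have Hbs : fconnect phi b (sigma b).
  by apply: connect_trans Hb2; rewrite fconnect_sym //; exact: phi_inj.
set k := findex phi b (sigma b).
have Hkk : iter k phi b = sigma b by exact: iter_findex.
have Hkn : k < n by rewrite -Hnb; exact: findex_max.
have Hbk : iter (n - k) phi (sigma b) = b by rewrite -Hnb; exact: ordsum.
have sb : fconnect sigma b (sigma b) by exact: fconnect1.
have k3 : 3 <= k by apply: (ge3 (x:=b)); rewrite Hkk // eq_sym nofix.
have k4 : k != 3 by apply/eqP => E; apply: (no3 (b:=b)); rewrite -E.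
have nk3 : 3 <= n - k.
  by apply: (ge3 (x:=sigma b)); rewrite Hbk ?nofix //; apply: sym_s.
move: n12 k3 k4 nk3 Hkn; clear; move: k n => k n.
move=> *; apply/andP; split; lia.
Qed.

End Aux.

Theorem lemma2p2 (D : finType) (alpha sigma : D -> D) :
  planar_PCC alpha sigma ->
  forall d : D,
    (face_vertex_repeat alpha sigma d -> 7 <= face_len alpha sigma d <= 11) /\
    (face_edge_repeat alpha sigma d -> 7 <= face_len alpha sigma d <= 11).
Proof.
move=> [[sinj ainv _ _ _] [noloop nomult] curv deg3 _] d.
have VC := vertex_case sinj ainv noloop nomult deg3 curv.
split.
- by move=> [d1 [d2 [H1 H2 Hne Hs]]]; exact: VC H1 H2 Hne Hs.
- move=> [d1 [H1 H2]].
  have H3 : fconnect (face_perm alpha sigma) d (sigma d1).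
    apply: connect_trans H2 _.
    by have := fconnect1 (face_perm alpha sigma) (alpha d1); rewrite {2}/face_perm ainv.
  apply: VC H1 H3 _ _; first by rewrite eq_sym nofix.
  exact: fconnect1.
Qed.
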